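(* Let $t>1$ be an integer, let $x,y$ be elements both lying in $A(t)$ or both lying in $B(t)$, with $x,y\notin H(t)$, and suppose $x=(c\rho_t)^{\alpha}(d\rho_t)^{\beta}\,y\,(c\rho_t)^{\gamma}(d\rho_t)^{\delta}$ for some integers $\alpha,\beta,\gamma,\delta$. If $x,y\in A(t)$, then $\alpha+\gamma$, $\beta$ and $\delta$ are uniquely determined modulo $t$ by this equality. If $x,y\in B(t)$, then $\beta+\delta$, $\alpha$ and $\gamma$ are uniquely determined modulo $t$ by this equality.
   Context: Fix integers $m,n>1$ and let $G_{mn}=\langle a,b;\ [a^m,b^n]=1\rangle$; $c=a^m$, $d=b^n$, $H=\langle c,d\rangle$, $A=\langle a,H\rangle$, $B=\langle b,H\rangle$. For an integer $t>1$ let $G_{mn}(t)=\langle a,b;\ [a^m,b^n]=1,\ a^{mt}=b^{nt}=1\rangle$, $\rho_t:G_{mn}\to G_{mn}(t)$ the natural homomorphism, $H(t)=H\rho_t\cong H/H^t$ (so $c\rho_t=cH^t$, $d\rho_t=dH^t$), $A(t)=A\rho_t$, $B(t)=B\rho_t$. *)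

(* Defs.v *)
(* The finitely presented group
     G_mn(t) = < a, b ; [a^m, b^n] = 1, a^(mt) = b^(nt) = 1 >
   is modelled by its monoid presentation: words over the letters
   a, a^-1, b, b^-1, modulo the congruence generated by the free-group
   cancellations and the defining relators. *)
From mathcomp Require Import all_boot all_order all_algebra.
Set Implicit Arguments. Unset Strict Implicit. Unset Printing Implicit Defensive.
Import Order.TTheory GRing.Theory Num.Theory.

Inductive letter := La | LAi | Lb | LBi.

Definition word := seq letter.

Definition lpow (l li : letter) (k : int) : word :=
  match k with
  | Posz k => nseq k l
  | Negz k => nseq k.+1 li
  end.

Definition apow (k : int) : word := lpow La LAi k.
Definition bpow (k : int) : word := lpow Lb LBi k.

Inductive basic_rel (m n t : nat) : word -> word -> Prop :=
  | br_a  : basic_rel m n t [:: La; LAi] [::]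
  | br_ai : basic_rel m n t [:: LAi; La] [::]
  | br_b  : basic_rel m n t [:: Lb; LBi] [::]
  | br_bi : basic_rel m n t [:: LBi; Lb] [::]
  | br_comm : basic_rel m n t (apow m%:Z ++ bpow n%:Z) (bpow n%:Z ++ apow m%:Z)
  | br_at : basic_rel m n t (apow (m * t)%:Z) [::]
  | br_bt : basic_rel m n t (bpow (n * t)%:Z) [::].

Inductive Geq (m n t : nat) : word -> word -> Prop :=
  | Geq_refl w : Geq m n t w w
  | Geq_sym u v : Geq m n t u v -> Geq m n t v u
  | Geq_trans u v w : Geq m n t u v -> Geq m n t v w -> Geq m n t u w
  | Geq_step p u v s : basic_rel m n t u v -> Geq m n t (p ++ u ++ s) (p ++ v ++ s).

(* c rho_t = a^m, d rho_t = b^n *)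
Definition cpow (m : nat) (k : int) : word := apow (m%:Z * k).
Definition dpow (n : nat) (k : int) : word := bpow (n%:Z * k).

(* membership in A(t) = <a, d>, B(t) = <b, c>, H(t) = <c, d> (images in G_mn(t)) *)
Definition inA (m n t : nat) (w : word) : Prop :=
  exists s : seq (int * int),
    Geq m n t w (flatten [seq apow p.1 ++ dpow n p.2 | p <- s]).
Definition inB (m n t : nat) (w : word) : Prop :=
  exists s : seq (int * int),
    Geq m n t w (flatten [seq bpow p.1 ++ cpow m p.2 | p <- s]).
Definition inH (m n t : nat) (w : word) : Prop :=
  exists s : seq (int * int),
    Geq m n t w (flatten [seq cpow m p.1 ++ dpow n p.2 | p <- s]).

(* Main.v *)
Require Import Defs.
From mathcomp Require Import all_boot all_order all_algebra zify.
Set Implicit Arguments. Unset Strict Implicit. Unset Printing Implicit Defensive.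
Import Order.TTheory GRing.Theory Num.Theory.

Section GeqBasics.
Variables m n t : nat.
Local Notation G := (Geq m n t).

Lemma Geq_ctx p u v s : G u v -> G (p ++ u ++ s) (p ++ v ++ s).
Proof.
elim=> {u v} [w|u v _ IH|u v w _ IH1 _ IH2|p' u v s' r].
- exact: Geq_refl.
- exact: Geq_sym.
- exact: Geq_trans IH2.
- rewrite !catA -!(catA _ p') -!(catA _ _ s').
  by rewrite -!catA; have := Geq_step (p ++ p') (s' ++ s) r; rewrite !catA.
Qed.

Lemma Geq_catr u v s : G u v -> G (u ++ s) (v ++ s).
Proof. by move=> h; have := Geq_ctx [::] s h. Qed.
Lemma Geq_catl p u v : G u v -> G (p ++ u) (p ++ v).
Proof. by move=> h; have := Geq_ctx p [::] h; rewrite !cats0. Qed.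
Lemma Geq_cat u v u' v' : G u v -> G u' v' -> G (u ++ u') (v ++ v').
Proof. move=> h1 h2; apply: Geq_trans (Geq_catr _ h1) (Geq_catl _ h2). Qed.

Lemma lpow_add1 (l li : letter) :
  (forall p s, G (p ++ [:: li; l] ++ s) (p ++ s)) ->
  forall x, G (lpow l li x ++ [:: l]) (lpow l li (x + 1)).
Proof.
move=> H [k|k].
- have -> : (Posz k + 1 = Posz k.+1)%R by lia.
  rewrite /lpow (_ : nseq k.+1 l = nseq k l ++ [:: l]); first exact: Geq_refl.
  by rewrite -[k.+1]addn1 nseqD.
- case: k => [|k].
  + by have := H [::] [::]; rewrite /=.
  + have -> : (Negz k.+1 + 1 = Negz k)%R by rewrite !NegzE; lia.
    rewrite /lpow (_ : nseq k.+2 li = nseq k.+1 li ++ [:: li]); last first.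
      by rewrite -[k.+2]addn1 nseqD.
    by move: (H (nseq k.+1 li) [::]); rewrite !cats0 -catA.
Qed.

Lemma lpow_sub1 (l li : letter) :
  (forall p s, G (p ++ [:: l; li] ++ s) (p ++ s)) ->
  forall x, G (lpow l li x ++ [:: li]) (lpow l li (x - 1)).
Proof.
move=> H [k|k].
- case: k => [|k].
  + have -> : (Posz 0 - 1 = Negz 0)%R by [].
    exact: Geq_refl.
  + have -> : (Posz k.+1 - 1 = Posz k)%R by lia.
    rewrite /lpow (_ : nseq k.+1 l = nseq k l ++ [:: l]); last first.
      by rewrite -[k.+1]addn1 nseqD.
    by move: (H (nseq k l) [::]); rewrite !cats0 -catA.
- have -> : (Negz k - 1 = Negz k.+1)%R by rewrite !NegzE; lia.
  rewrite /lpow (_ : nseq k.+2 li = nseq k.+1 li ++ [:: li]); first exact: Geq_refl.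
  by rewrite -[k.+2]addn1 nseqD.
Qed.

Lemma lpow_add (l li : letter) :
  (forall p s, G (p ++ [:: li; l] ++ s) (p ++ s)) ->
  (forall p s, G (p ++ [:: l; li] ++ s) (p ++ s)) ->
  forall x y, G (lpow l li x ++ lpow l li y) (lpow l li (x + y)).
Proof.
move=> H1 H2 x [N|N].
- elim: N => [|N IH].
  + by rewrite /= cats0 addr0; exact: Geq_refl.
  + rewrite /lpow (_ : nseq N.+1 l = nseq N l ++ [:: l]); last first.
      by rewrite -[N.+1]addn1 nseqD.
    rewrite catA; apply: Geq_trans (Geq_catr _ IH) _.
    have -> : (x + Posz N.+1 = (x + Posz N) + 1)%R by lia.
    exact: lpow_add1.
- elim: N => [|N IH].
  + have -> : (x + Negz 0 = x - 1)%R by rewrite NegzE; lia.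
    exact: lpow_sub1.
  + rewrite /lpow (_ : nseq N.+2 li = nseq N.+1 li ++ [:: li]); last first.
      by rewrite -[N.+2]addn1 nseqD.
    rewrite catA; apply: Geq_trans (Geq_catr _ IH) _.
    have -> : (x + Negz N.+1 = (x + Negz N) - 1)%R by rewrite !NegzE; lia.
    exact: lpow_sub1.
Qed.

Lemma apow_add x y : G (apow x ++ apow y) (apow (x + y)).
Proof.
apply: lpow_add => p s.
- exact: (Geq_step p s (br_ai m n t)).
- exact: (Geq_step p s (br_a m n t)).
Qed.
Lemma bpow_add x y : G (bpow x ++ bpow y) (bpow (x + y)).
Proof.
apply: lpow_add => p s.
- exact: (Geq_step p s (br_bi m n t)).
- exact: (Geq_step p s (br_b m n t)).
Qed.

End GeqBasics.

Section Per.
Variables m n t : nat.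
Local Notation G := (Geq m n t).

Lemma lpow_per (l li : letter) (P : int) :
  (forall p s, G (p ++ [:: li; l] ++ s) (p ++ s)) ->
  (forall p s, G (p ++ [:: l; li] ++ s) (p ++ s)) ->
  G (lpow l li P) [::] ->
  forall x y, (x %% P = y %% P)%Z -> G (lpow l li x) (lpow l li y).
Proof.
move=> H1 H2 HP.
have step y : G (lpow l li (y + P)) (lpow l li y).
  apply: Geq_trans (Geq_sym (lpow_add H1 H2 _ _)) _.
  by have := Geq_catl (lpow l li y) HP; rewrite cats0.
have stepN y (N : nat) : G (lpow l li (y + P * N%:Z)) (lpow l li y).
  elim: N => [|N IH]; first by rewrite mulr0 addr0; exact: Geq_refl.
  have -> : (y + P * N.+1%:Z = (y + P * N%:Z) + P)%R.
    by rewrite -addn1 PoszD mulrDr mulr1 addrA.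
  exact: Geq_trans (step _) IH.
have red x : G (lpow l li x) (lpow l li (x %% P)%Z).
  rewrite {1}(divz_eq x P).
  case: (x %/ P)%Z => N.
  - by rewrite addrC mulrC; exact: stepN.
  - apply: Geq_sym.
    have := stepN (Negz N * P + (x %% P)%Z)%R N.+1.
    have -> : ((Negz N * P + (x %% P)%Z) + P * N.+1%:Z = (x %% P)%Z)%R.
      by rewrite NegzE; lia.
    by [].
move=> x y E; apply: Geq_trans (red x) _; rewrite E; exact: Geq_sym (red y).
Qed.

Lemma apow_mod x y : (x %% (m * t)%:Z = y %% (m * t)%:Z)%Z -> G (apow x) (apow y).
Proof.
apply: lpow_per => [p s|p s|].
- exact: (Geq_step p s (br_ai m n t)).
- exact: (Geq_step p s (br_a m n t)).
- by have := Geq_step [::] [::] (br_at m n t); rewrite /= !cats0.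
Qed.
Lemma bpow_mod x y : (x %% (n * t)%:Z = y %% (n * t)%:Z)%Z -> G (bpow x) (bpow y).
Proof.
apply: lpow_per => [p s|p s|].
- exact: (Geq_step p s (br_bi m n t)).
- exact: (Geq_step p s (br_b m n t)).
- by have := Geq_step [::] [::] (br_bt m n t); rewrite /= !cats0.
Qed.
End Per.

Section Comm.
Variables m n t : nat.
Local Notation G := (Geq m n t).
Definition comm u v := G (u ++ v) (v ++ u).

Lemma comm_sym u v : comm u v -> comm v u.
Proof. exact: Geq_sym. Qed.
Lemma comm_geq u u' v : G u u' -> comm u v -> comm u' v.
Proof.
move=> h c; rewrite /comm.
apply: Geq_trans (Geq_catr _ (Geq_sym h)) _.
apply: Geq_trans c _; exact: Geq_catl.
Qed.
Lemma comm_cat u1 u2 v : comm u1 v -> comm u2 v -> comm (u1 ++ u2) v.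
Proof.
move=> c1 c2; rewrite /comm -catA.
apply: Geq_trans (Geq_catl _ c2) _; rewrite !catA; exact: Geq_catr.
Qed.
Lemma comm_inv u u' v : comm u v -> G (u ++ u') [::] -> G (u' ++ u) [::] -> comm u' v.
Proof.
move=> c h1 h2; rewrite /comm.
apply: Geq_trans (_ : G _ (u' ++ v ++ u ++ u')) _.
  by have := Geq_catl (u' ++ v) (Geq_sym h1); rewrite cats0 -!catA.
apply: Geq_trans (_ : G _ (u' ++ u ++ v ++ u')) _.
  by have := Geq_ctx u' u' (Geq_sym c); rewrite -!catA.
by have := Geq_catr (v ++ u') h2; rewrite -!catA.
Qed.

Lemma lpow_comm (l li : letter) (c : int) v :
  (forall p s, G (p ++ [:: li; l] ++ s) (p ++ s)) ->
  (forall p s, G (p ++ [:: l; li] ++ s) (p ++ s)) ->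
  comm (lpow l li c) v -> forall k, comm (lpow l li (c * k)) v.
Proof.
move=> H1 H2 c1.
have pos (N : nat) : comm (lpow l li (c * N%:Z)) v.
  elim: N => [|N IH]; first by rewrite mulr0 /comm /= cats0; exact: Geq_refl.
  have -> : (c * N.+1%:Z = c * N%:Z + c)%R by rewrite -addn1 PoszD mulrDr mulr1.
  exact: comm_geq (lpow_add H1 H2 _ _) (comm_cat IH c1).
case=> N; first exact: pos.
have e : (c * Negz N = - (c * N.+1%:Z))%R by rewrite NegzE mulrN.
rewrite e; apply: comm_inv (pos N.+1) _ _.
- apply: Geq_trans (lpow_add H1 H2 _ _) _; rewrite subrr; exact: Geq_refl.
- apply: Geq_trans (lpow_add H1 H2 _ _) _; rewrite addNr; exact: Geq_refl.
Qed.

Lemma cd_comm k w : comm (cpow m k) (dpow n w).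
Proof.
have H1 p s := Geq_step p s (br_ai m n t).
have H2 p s := Geq_step p s (br_a m n t).
have H3 p s := Geq_step p s (br_bi m n t).
have H4 p s := Geq_step p s (br_b m n t).
apply: comm_sym; apply: (lpow_comm H3 H4).
apply: comm_sym; apply: (lpow_comm H1 H2).
by have := Geq_step [::] [::] (br_comm m n t); rewrite /= !cats0.
Qed.
End Comm.

Definition st := (nat * nat * seq (nat * nat))%type.

Section Model.
Variables (m n t : nat) (hm : 0 < m) (hn : 0 < n) (ht : 0 < t).

Definition addA (x : nat) (s : st) : st :=
  let: (k, j0, l) := s in
  match l with
  | (i, 0) :: l' => let z := i + x in
      ((k + z %/ m) %% t, j0, if z %% m == 0 then l' else (z %% m, 0) :: l')
  | _ => ((k + x %/ m) %% t, j0, if x %% m == 0 then l else (x %% m, 0) :: l)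
  end.

Definition addD (y : nat) (s : st) : st :=
  let: (k, j0, l) := s in
  match l with
  | (i, j) :: l' => (k, j0, (i, (j + y) %% (n * t)) :: l')
  | [::] => (k, (j0 + y) %% (n * t), [::])
  end.

Definition step (s : st) (c : letter) : st :=
  match c with
  | La => addA 1 s
  | LAi => addA (m * t).-1 s
  | Lb => addD 1 s
  | LBi => addD (n * t).-1 s
  end.

Definition act (w : word) (s : st) : st := foldl step s w.

Definition inner (p : nat * nat) := (0 < p.1 < m) && (0 < p.2 < n * t).
Definition vl (l : seq (nat * nat)) :=
  match l with
  | [::] => true
  | (i, j) :: l' => [&& 0 < i < m, j < n * t & all inner l']
  end.
Definition valid (s : st) := let: (k, j0, l) := s in [&& k < t, j0 < n * t & vl l].

Lemma divD_split a b : (a + b) %/ m = a %/ m + (a %% m + b) %/ m.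
Proof. by rewrite {1}(divn_eq a m) -addnA divnMDl. Qed.
Lemma modD_split a b : (a + b) %% m = (a %% m + b) %% m.
Proof. by rewrite modnDml. Qed.
Lemma modt_add k u v : ((k + u) %% t + v) %% t = (k + (u + v)) %% t.
Proof. by rewrite modnDml addnA. Qed.

Ltac splitb := repeat (apply/andP; split).

Lemma addA_valid x s : valid s -> valid (addA x s).
Proof.
have hnt : 0 < n * t by rewrite muln_gt0 hn ht.
case: s => [[k j0] [|[i [|j]] l]] /= /and3P[_ hj0 hl].
- case: eqP => /= h; splitb => //; lia.
- move: hl => /and3P[hi _ hl].
  case: eqP => /= h.
  + case: l hl => [|[i' j'] l] /=; first by splitb => //; lia.
    move=> /andP[/andP[h1 /andP[h2 h3]] h4] /=; rewrite /= in h1 h2 h3; splitb => //; try lia.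
  + splitb => //; lia.
- move: hl => /and3P[hi hj hl].
  case: eqP => /= h; splitb => //=; lia.
Qed.

Lemma addA_comp x y s : valid s -> addA x (addA y s) = addA (y + x) s.
Proof.
case: s => [[k j0] [|[i [|j]] l]] /= /and3P[_ hj0 hl].
- rewrite (divD_split y x) (modD_split y x).
  case: eqP => h /=.
  + by rewrite h add0n modt_add.
  + by rewrite modt_add.
- rewrite addnA (divD_split (i + y) x) (modD_split (i + y) x).
  case: eqP => h /=.
  + rewrite h add0n modt_add.
    move: hl => /and3P[_ _]; case: l => [|[i' [|j'] ] l] //=.
    by rewrite andbC /= => /andP[_ /andP[_ /andP[]]].
  + by rewrite modt_add.
- rewrite (divD_split y x) (modD_split y x).
  case: eqP => h /=.
  + by rewrite h add0n modt_add.
  + by rewrite modt_add.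
Qed.

Lemma addA0 s : valid s -> addA 0 s = s.
Proof.
case: s => [[k j0] [|[i [|j]] l]] /= /and3P[hk hj0 hl].
- by rewrite div0n mod0n addn0 modn_small.
- move: hl => /and3P[/andP[hi0 him] _ _].
  rewrite addn0 divn_small // addn0 modn_small // modn_small //.
  by case: eqP => // h; move: hi0; rewrite h.
- by rewrite div0n mod0n addn0 modn_small.
Qed.

Lemma split_mt a x :
  ((a + x) %/ m = (a + x %% (m * t)) %/ m + x %/ (m * t) * t) /\
  ((a + x) %% m = (a + x %% (m * t)) %% m).
Proof.
have e : a + x = (x %/ (m * t) * t) * m + (a + x %% (m * t)).
  rewrite {1}(divn_eq x (m * t)).
  move: (x %/ (m * t)) (x %% (m * t)) => q r; nia.
rewrite e divnMDl // modnMDl; split => //; exact: addnC.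
Qed.

Lemma addA_mod x s : addA x s = addA (x %% (m * t)) s.
Proof.
have [e1 e2] := split_mt 0 x; rewrite !add0n in e1 e2.
case: s => [[k j0] [|[i [|j]] l]] /=.
- by rewrite e1 e2 addnA [_ + _ * t]addnC modnMDl.
- have [f1 f2] := split_mt i x.
  by rewrite f1 f2 addnA [_ + _ * t]addnC modnMDl.
- by rewrite e1 e2 addnA [_ + _ * t]addnC modnMDl.
Qed.

Lemma addA_mul g s : valid s -> let: (k, j0, l) := s in addA (m * g) s = ((k + g) %% t, j0, l).
Proof.
case: s => [[k j0] [|[i [|j]] l]] /= /and3P[hk hj0 hl].
- by rewrite (mulKn _ hm) modnMr.
- move: hl => /and3P[/andP[hi0 him] _ _].
  rewrite [i + _]addnC (mulnC m g) (divnMDl _ _ hm) modnMDl (divn_small him) addn0 (modn_small him).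
  by case: eqP => // h; move: hi0; rewrite h.
- by rewrite (mulKn _ hm) modnMr.
Qed.

Lemma addD_valid y s : valid s -> valid (addD y s).
Proof.
have hnt : 0 < n * t by rewrite muln_gt0 hn ht.
case: s => [[k j0] [|[i j] l]] /= /and3P[hk hj0 hl]; splitb => //; try lia.
Qed.

Lemma addD_comp x y s : addD x (addD y s) = addD (y + x) s.
Proof. by case: s => [[k j0] [|[i j] l]] /=; rewrite modnDml addnA. Qed.

Lemma addD0 s : valid s -> addD 0 s = s.
Proof.
case: s => [[k j0] [|[i j] l]] /= /and3P[hk hj0 hl]; first by rewrite addn0 modn_small.
by move: hl => /and3P[_ hj _]; rewrite addn0 modn_small.
Qed.

Lemma addD_mod y s : addD y s = addD (y %% (n * t)) s.
Proof. by case: s => [[k j0] [|[i j] l]] /=; rewrite modnDmr. Qed.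

Definition incr g (s : st) : st := let: (k, j0, l) := s in ((k + g) %% t, j0, l).

Lemma addA_incr g s : valid s -> addA (m * g) s = incr g s.
Proof. by move=> v; have := addA_mul g v; case: s v => [[k j0] l] v ->. Qed.

Lemma addAD g y s : valid s -> addA (m * g) (addD y s) = addD y (addA (m * g) s).
Proof.
move=> v; rewrite !addA_incr //; last exact: addD_valid.
by case: s v => [[k j0] [|[i j] l]].
Qed.

Lemma step_valid s c : valid s -> valid (step s c).
Proof. by case: c => v /=; [apply: addA_valid|apply: addA_valid|apply: addD_valid|apply: addD_valid]. Qed.

Lemma act_valid w s : valid s -> valid (act w s).
Proof. elim: w s => [|c w IH] s v //=; apply: IH; exact: step_valid. Qed.

Lemma act_cat u v s : act (u ++ v) s = act v (act u s).
Proof. by rewrite /act foldl_cat. Qed.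

Lemma act_nseq_gen N s x (f : nat -> st -> st) :
  (forall s, valid s -> step s x = f 1 s) ->
  (forall s, valid s -> valid (f 1 s)) ->
  (forall s, valid s -> f 0 s = s) ->
  (forall s a, valid s -> f a (f 1 s) = f (1 + a) s) ->
  valid s -> act (nseq N x) s = f N s.
Proof.
move=> hx hv h0 hc; elim: N s => [|N IH] s v /=; first by rewrite h0.
by rewrite hx // IH ?hc //; apply: hv.
Qed.

Lemma act_nseqA N s : valid s -> act (nseq N La) s = addA N s.
Proof.
apply: act_nseq_gen => //= s' v; [exact: addA_valid|exact: addA0|exact: addA_comp].
Qed.
Lemma act_nseqAi N s : valid s -> act (nseq N LAi) s = addA (N * (m * t).-1) s.
Proof.
apply: (@act_nseq_gen N s LAi (fun a s => addA (a * (m * t).-1) s)) => //= s' v.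
- by rewrite mul1n.
- exact: addA_valid.
- by rewrite mul0n addA0.
- by move=> a; rewrite addA_comp // -mulnDl.
Qed.
Lemma act_nseqB N s : valid s -> act (nseq N Lb) s = addD N s.
Proof.
apply: act_nseq_gen => //= s' v; [exact: addD_valid|exact: addD0|move=> a; exact: addD_comp].
Qed.
Lemma act_nseqBi N s : valid s -> act (nseq N LBi) s = addD (N * (n * t).-1) s.
Proof.
apply: (@act_nseq_gen N s LBi (fun a s => addD (a * (n * t).-1) s)) => //= s' v.
- by rewrite mul1n.
- exact: addD_valid.
- by rewrite mul0n addD0.
- by move=> a; rewrite addD_comp // -mulnDl.
Qed.

Definition natmod (z : int) (P : nat) : nat := `|(z %% Posz P)%Z|%N.

Lemma natmodE z P : 0 < P -> Posz (natmod z P) = (z %% Posz P)%Z.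
Proof. by move=> hP; rewrite /natmod gez0_abs // modz_ge0 // eqz_nat -lt0n. Qed.

Lemma natmod_neg N P : 0 < P -> (N.+1 * P.-1) %% P = natmod (Negz N) P.
Proof.
move=> hP; apply/eqP; rewrite -eqz_nat natmodE // -modz_nat.
have -> : Posz (N.+1 * P.-1) = (Posz N.+1 * Posz P + Negz N)%R.
  rewrite NegzE; have : P = P.-1.+1 by rewrite prednK.
  move: (P.-1) => q ->; lia.
by rewrite modzMDl.
Qed.

Lemma act_apow z s : valid s -> act (apow z) s = addA (natmod z (m * t)) s.
Proof.
have hmt : 0 < m * t by rewrite muln_gt0 hm ht.
move=> v; case: z => N; rewrite /apow /lpow.
- by rewrite act_nseqA // addA_mod /natmod modz_nat.
- by rewrite act_nseqAi // addA_mod natmod_neg.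
Qed.
Lemma act_bpow z s : valid s -> act (bpow z) s = addD (natmod z (n * t)) s.
Proof.
have hnt : 0 < n * t by rewrite muln_gt0 hn ht.
move=> v; case: z => N; rewrite /bpow /lpow.
- by rewrite act_nseqB // addD_mod /natmod modz_nat.
- by rewrite act_nseqBi // addD_mod natmod_neg.
Qed.

Lemma basic_act u v s : basic_rel m n t u v -> valid s -> act u s = act v s.
Proof.
have hmt : 0 < m * t by rewrite muln_gt0 hm ht.
have hnt : 0 < n * t by rewrite muln_gt0 hn ht.
case=> v0 /=.
- rewrite addA_comp // add1n prednK // addA_mod modnn; exact: addA0.
- rewrite addA_comp ?addA_valid // addn1 prednK // addA_mod modnn; exact: addA0.
- rewrite addD_comp add1n prednK // addD_mod modnn; exact: addD0.
- rewrite addD_comp addn1 prednK // addD_mod modnn; exact: addD0.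
- rewrite !act_cat /apow /bpow /lpow act_nseqA // act_nseqB ?addA_valid //.
  rewrite act_nseqB // act_nseqA ?addD_valid //.
  by rewrite -(muln1 m) addAD.
- rewrite /apow /lpow act_nseqA // addA_mod modnn; exact: addA0.
- rewrite /bpow /lpow act_nseqB // addD_mod modnn; exact: addD0.
Qed.

Lemma act_geq u v : Geq m n t u v -> forall s, valid s -> act u s = act v s.
Proof.
elim=> {u v} [w|u v _ IH|u v w _ IH1 _ IH2|p u v s' r] s0 v0.
- by [].
- by rewrite IH.
- by rewrite IH1 // IH2.
- rewrite !act_cat (basic_act r) //; exact: act_valid.
Qed.

Local Notation G := (Geq m n t).

Definition Pre (l : seq (nat * nat)) : word :=
  flatten [seq apow (Posz p.1) ++ bpow (Posz p.2) | p <- rev l].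
Definition nfword (s : st) : word :=
  let: (k, j0, l) := s in bpow (Posz j0) ++ Pre l ++ cpow m (Posz k).

Lemma Pre_cons i j l : Pre ((i, j) :: l) = Pre l ++ apow (Posz i) ++ bpow (Posz j).
Proof. by rewrite /Pre rev_cons map_rcons flatten_rcons. Qed.

Lemma arith_nat a k :
  (a %% m + m * ((k + a %/ m) %% t)) %% (m * t) = (a + m * k) %% (m * t).
Proof.
rewrite muln_modr modnDmr; congr (_ %% _).
have e := divn_eq a m.
move: (a %/ m) (a %% m) e => q r ->; nia.
Qed.

Lemma core_a i k z :
  G (apow (Posz i) ++ cpow m (Posz k) ++ apow z)
    (apow (Posz ((i + natmod z (m * t)) %% m)) ++
     cpow m (Posz ((k + (i + natmod z (m * t)) %/ m) %% t))).
Proof.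
have hmt : 0 < m * t by rewrite muln_gt0 hm ht.
have hx := natmodE z hmt.
move: (natmod z (m * t)) hx => x hx.
rewrite /cpow.
apply: Geq_trans (Geq_catl _ (apow_add _ _ _ _ _)) _.
apply: Geq_trans (apow_add _ _ _ _ _) _.
apply: Geq_trans _ (Geq_sym (apow_add _ _ _ _ _)).
apply: apow_mod.
set A := (i + x) %% m; set B := (k + (i + x) %/ m) %% t.
have e : (Posz A + Posz m * Posz B = Posz (A + m * B))%R by [].
rewrite e modz_nat /A /B arith_nat -modz_nat.
have e2 : (Posz i + (Posz m * Posz k + z) = (Posz i + Posz m * Posz k) + z)%R by rewrite addrA.
have e3 : Posz (i + x + m * k) = ((Posz i + Posz m * Posz k) + Posz x)%R by rewrite addrAC.
by rewrite e2 e3 hx modzDmr.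
Qed.

Lemma nf_push k j0 l r :
  G (nfword (k, j0, if r == 0 then l else (r, 0) :: l))
    (bpow (Posz j0) ++ Pre l ++ apow (Posz r) ++ cpow m (Posz k)).
Proof. by case: r => [|r] /=; rewrite ?Pre_cons -?catA; exact: Geq_refl. Qed.

Lemma nf_apow s z : valid s -> G (nfword s ++ apow z) (nfword (act (apow z) s)).
Proof.
move=> v; rewrite act_apow //.
case: s v => [[k j0] l] v.
have gen i l' : G (bpow (Posz j0) ++ Pre l' ++ apow (Posz i) ++ cpow m (Posz k) ++ apow z)
   (nfword (((k + (i + natmod z (m * t)) %/ m) %% t), j0,
     if (i + natmod z (m * t)) %% m == 0 then l' else ((i + natmod z (m * t)) %% m, 0) :: l')).
  apply: Geq_trans _ (Geq_sym (nf_push _ _ _ _)).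
  by apply: Geq_catl; apply: Geq_catl; apply: core_a.
case: l v => [|[i [|j]] l] v.
- by have := gen 0 [::]; rewrite add0n /= -!catA.
- by have := gen i l; rewrite /= Pre_cons -!catA.
- by have := gen 0 ((i, j.+1) :: l); rewrite add0n /= -!catA.
Qed.

Lemma core_d J k w :
  G (bpow (Posz J) ++ cpow m k ++ dpow n w)
    (bpow (Posz ((J + natmod (Posz n * w) (n * t)) %% (n * t))) ++ cpow m k).
Proof.
have hnt : 0 < n * t by rewrite muln_gt0 hn ht.
apply: Geq_trans (Geq_catl _ (cd_comm _ _ _ _ _)) _.
rewrite catA; apply: Geq_catr.
apply: Geq_trans (bpow_add _ _ _ _ _) _.
apply: bpow_mod.
rewrite modz_nat modn_mod -modz_nat PoszD natmodE //.
by rewrite modzDmr.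
Qed.

Lemma nf_dpow s w : valid s -> G (nfword s ++ dpow n w) (nfword (act (dpow n w) s)).
Proof.
move=> v; rewrite /dpow act_bpow //.
case: s v => [[k j0] [|[i j] l]] v /=.
- by have := core_d j0 (Posz k) w; rewrite -!catA.
- rewrite !Pre_cons -!catA; do 3 apply: Geq_catl.
  exact: core_d.
Qed.

Lemma natmod_mul p d w : 0 < p -> 0 < d -> natmod (Posz p * w) (p * d) = p * natmod w d.
Proof.
move=> hp hd; apply/eqP; rewrite -eqz_nat natmodE ?muln_gt0 ?hp ?hd //.
by rewrite PoszM -mulz_modr ?ltz_nat // -natmodE.
Qed.

Definition dv (s : st) := let: (k, j0, l) := s in (n %| j0) && all (fun p => n %| p.2) l.

Lemma dvd_modn a y : n %| a -> n %| y -> n %| (a + y) %% (n * t).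
Proof.
move=> /dvdnP[a' ->] /dvdnP[y' ->].
by rewrite -mulnDl (mulnC _ n) -muln_modr dvdn_mulr.
Qed.

Lemma dv_addA x s : dv s -> dv (addA x s).
Proof.
case: s => [[k j0] [|[i [|j]] l]] /= /andP[h1 h2]; rewrite h1 /=;
  case: eqP => _ //=; rewrite ?dvdn0 //=; by case/andP: h2.
Qed.

Lemma dv_addD y s : n %| y -> dv s -> dv (addD y s).
Proof.
move=> hy; case: s => [[k j0] [|[i j] l]] /= /andP[h1 h2].
- by rewrite dvd_modn.
- by case/andP: h2 => h3 h4; rewrite h1 /= dvd_modn.
Qed.

Definition e0 : st := (0, 0, [::]).
Lemma valid_e0 : valid e0.
Proof. by rewrite /= ht muln_gt0 hn ht. Qed.

Definition Aword (S : seq (int * int)) := flatten [seq apow p.1 ++ dpow n p.2 | p <- S].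

Lemma nf_A S : [/\ valid (act (Aword S) e0), dv (act (Aword S) e0) &
   G (Aword S) (nfword (act (Aword S) e0))].
Proof.
elim/last_ind: S => [|S [a w] [v d g]].
- split; [exact: valid_e0|by rewrite /= dvdn0|].
  by rewrite /= /cpow mulr0; exact: Geq_refl.
- rewrite /Aword map_rcons flatten_rcons -/(Aword S) /= !act_cat.
  have va := act_valid (apow a) v.
  split.
  + exact: act_valid.
  + rewrite /dpow act_bpow // act_apow //.
    apply: dv_addD; last exact: dv_addA.
    by rewrite natmod_mul // dvdn_mulr.
  + apply: Geq_trans (Geq_catr _ g) _.
    rewrite catA; apply: Geq_trans (Geq_catr _ (nf_apow _ v)) _.
    exact: nf_dpow.
Qed.

Definition mulL (h : nat * nat) (s : st) : st :=
  let: (k, j0, l) := s in ((k + h.1) %% t, (j0 + h.2) %% (n * t), l).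

Lemma addA_mulL x h s : addA x (mulL h s) = mulL h (addA x s).
Proof.
case: h => a b; case: s => [[k j0] [|[i [|j]] l]] /=; congr (_, _, _);
  by rewrite !modnDml addnAC.
Qed.
Lemma addD_mulL x h s : addD x (mulL h s) = mulL h (addD x s).
Proof.
case: h => a b; case: s => [[k j0] [|[i j] l]] //=.
by rewrite !modnDml addnAC.
Qed.
Lemma act_mulL w h s : act w (mulL h s) = mulL h (act w s).
Proof.
elim: w s => [|c w IH] s //=; rewrite -IH; congr (act w _).
by case: c => /=; rewrite ?addA_mulL ?addD_mulL.
Qed.

Lemma cancel_nat J X X' P : (J + X) %% P = (J + X') %% P ->
  (Posz X %% Posz P = Posz X' %% Posz P)%Z.
Proof.
move=> h; apply/eqP; rewrite -(eqz_modDl (Posz J)) -!PoszD !modz_nat.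
by rewrite h.
Qed.

Lemma act_cpow g s : valid s -> act (cpow m g) s = incr (natmod g t) s.
Proof. by move=> v; rewrite /cpow act_apow // natmod_mul // addA_incr. Qed.

Lemma act_front al be : act (cpow m al ++ dpow n be) e0 =
  mulL (natmod al t, natmod (Posz n * be) (n * t)) e0.
Proof.
rewrite act_cat act_cpow ?valid_e0 // /dpow act_bpow //.
by rewrite /= ltn_pmod // muln_gt0 hn ht.
Qed.

Lemma natmod_cong z z' P : 0 < P ->
  (Posz (natmod z P) %% Posz P = Posz (natmod z' P) %% Posz P)%Z -> (z %% Posz P = z' %% Posz P)%Z.
Proof. by move=> hP; rewrite !natmodE // !modz_mod. Qed.

Lemma nmul_cong z z' : (Posz n * z %% Posz (n * t) = Posz n * z' %% Posz (n * t))%Z ->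
  (z %% Posz t = z' %% Posz t)%Z.
Proof.
rewrite PoszM -!mulz_modr ?ltz_nat //; apply: mulfI.
by rewrite eqz_nat -lt0n.
Qed.

Lemma partA x y : inA m n t y -> ~ inH m n t y ->
  forall al be ga de al' be' ga' de' : int,
       G x (cpow m al ++ dpow n be ++ y ++ cpow m ga ++ dpow n de) ->
       G x (cpow m al' ++ dpow n be' ++ y ++ cpow m ga' ++ dpow n de') ->
       [/\ (al + ga = al' + ga' %[mod t%:Z])%Z,
           (be = be' %[mod t%:Z])%Z &
           (de = de' %[mod t%:Z])%Z].
Proof.
have hnt : 0 < n * t by rewrite muln_gt0 hn ht.
move=> [S hS] nH al be ga de al' be' ga' de' h1 h2.
have key a b c d : act (cpow m a ++ dpow n b ++ y ++ cpow m c ++ dpow n d) e0 =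
   mulL (natmod a t, natmod (Posz n * b) (n * t)) (act (cpow m c ++ dpow n d) (act y e0)).
  by rewrite catA act_cat act_front act_mulL act_cat.
have E := act_geq (Geq_trans (Geq_sym h1) h2) valid_e0.
rewrite !key in E.
have [vY dY gY] := nf_A S.
have ey : act y e0 = act (Aword S) e0 by apply: act_geq => //; exact: valid_e0.
rewrite ey in E.
move: (act (Aword S) e0) vY dY gY E => [[kY jY] lY] vY dY gY E.
case: lY vY dY gY E => [|[i j] l] vY dY gY E.
- exfalso; apply: nH.
  move: dY => /= /andP[/dvdnP[q eq] _].
  exists [:: (Posz kY, Posz q)]; rewrite /= cats0.
  apply: Geq_trans hS _; apply: Geq_trans gY _.
  rewrite /= eq mulnC.
  have -> : nseq (n * q) Lb = dpow n (Posz q) by rewrite /dpow -PoszM.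
  exact: Geq_sym (cd_comm _ _ _ _ _).
- have hk t0 : valid (incr t0 (kY, jY, (i, j) :: l)).
    move: vY => /= /and3P[_ -> ->]; rewrite ltn_pmod //.
  rewrite !act_cat !act_cpow // /dpow !act_bpow // in E.
  case: E => Ek Ej El.
  split.
  + rewrite !modnDml -!addnA in Ek.
    have := cancel_nat Ek; rewrite !PoszD !natmodE // -modzDm -[in RHS]modzDm.
    by rewrite !modz_mod !modzDm (addrC ga) (addrC ga').
  + by apply: nmul_cong; apply: natmod_cong => //; exact: cancel_nat Ej.
  + by apply: nmul_cong; apply: natmod_cong => //; exact: cancel_nat El.
Qed.
End Model.

Definition sw (c : letter) := match c with La => Lb | LAi => LBi | Lb => La | LBi => LAi end.
Definition swap (w : word) : word := map sw w.

Lemma swap_apow z : swap (apow z) = bpow z.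
Proof. by case: z => N; rewrite /swap /apow /bpow /lpow map_nseq. Qed.
Lemma swap_bpow z : swap (bpow z) = apow z.
Proof. by case: z => N; rewrite /swap /apow /bpow /lpow map_nseq. Qed.
Lemma swapK w : swap (swap w) = w.
Proof. by elim: w => [|[] w IH] //=; rewrite IH. Qed.
Lemma swap_cat u v : swap (u ++ v) = swap u ++ swap v.
Proof. exact: map_cat. Qed.

Lemma swap_geq m n t u v : Geq m n t u v -> Geq n m t (swap u) (swap v).
Proof.
elim=> {u v} [w|u v _ IH|u v w _ IH1 _ IH2|p u v s r].
- exact: Geq_refl.
- exact: Geq_sym.
- exact: Geq_trans IH2.
- rewrite !swap_cat; case: r.
  + exact: (Geq_step _ _ (br_b n m t)).
  + exact: (Geq_step _ _ (br_bi n m t)).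
  + exact: (Geq_step _ _ (br_a n m t)).
  + exact: (Geq_step _ _ (br_ai n m t)).
  + rewrite !swap_cat !swap_apow !swap_bpow.
    exact: Geq_sym (Geq_step _ _ (br_comm n m t)).
  + rewrite swap_apow; exact: (Geq_step _ _ (br_bt n m t)).
  + rewrite swap_bpow; exact: (Geq_step _ _ (br_at n m t)).
Qed.

Lemma swap_flat (f g : int * int -> word) S :
  (forall p, swap (f p) = g p) -> swap (flatten (map f S)) = flatten (map g S).
Proof. by move=> h; elim: S => [|p S IH] //=; rewrite swap_cat IH h. Qed.

Lemma geq_flat m n t (f g : int * int -> word) S :
  (forall p, Geq m n t (f p) (g p)) -> Geq m n t (flatten (map f S)) (flatten (map g S)).
Proof.
move=> h; elim: S => [|p S IH] /=; first exact: Geq_refl.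
exact: Geq_cat.
Qed.

Theorem lemma2 (m n t : nat) (hm : (1 < m)%N) (hn : (1 < n)%N) (ht : (1 < t)%N) :
  (forall (x y : word), inA m n t x -> inA m n t y -> ~ inH m n t x -> ~ inH m n t y ->
     forall al be ga de al' be' ga' de' : int,
       Geq m n t x (cpow m al ++ dpow n be ++ y ++ cpow m ga ++ dpow n de) ->
       Geq m n t x (cpow m al' ++ dpow n be' ++ y ++ cpow m ga' ++ dpow n de') ->
       [/\ (al + ga = al' + ga' %[mod t%:Z])%Z,
           (be = be' %[mod t%:Z])%Z &
           (de = de' %[mod t%:Z])%Z])
  /\
  (forall (x y : word), inB m n t x -> inB m n t y -> ~ inH m n t x -> ~ inH m n t y ->
     forall al be ga de al' be' ga' de' : int,
       Geq m n t x (cpow m al ++ dpow n be ++ y ++ cpow m ga ++ dpow n de) ->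
       Geq m n t x (cpow m al' ++ dpow n be' ++ y ++ cpow m ga' ++ dpow n de') ->
       [/\ (be + de = be' + de' %[mod t%:Z])%Z,
           (al = al' %[mod t%:Z])%Z &
           (ga = ga' %[mod t%:Z])%Z]).
Proof.
have hm0 : (0 < m)%N by apply: ltnW.
have hn0 : (0 < n)%N by apply: ltnW.
have ht0 : (0 < t)%N by apply: ltnW.
split.
  move=> x y _ iy _ ny al be ga de al' be' ga' de'.
  exact: (partA hm0 hn0 ht0 iy ny).
move=> x y _ [S hS] _ ny al be ga de al' be' ga' de' h1 h2.
have reord a b c d : Geq n m t (swap (cpow m a ++ dpow n b ++ y ++ cpow m c ++ dpow n d))
   (cpow n b ++ dpow m a ++ swap y ++ cpow n d ++ dpow m c).
  rewrite !swap_cat /cpow /dpow !swap_apow !swap_bpow.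
  apply: Geq_trans (_ : Geq n m t _ ((apow (Posz n * b)%R ++ bpow (Posz m * a)%R) ++ swap y ++ bpow (Posz m * c)%R ++ apow (Posz n * d)%R)) _.
    rewrite catA; apply: Geq_catr; exact: Geq_sym (cd_comm n m t _ _).
  rewrite -!catA; do 3 apply: Geq_catl; exact: Geq_sym (cd_comm n m t _ _).
have iy : inA n m t (swap y).
  exists S; move: (swap_geq hS); rewrite (@swap_flat _ (fun p => apow p.1 ++ dpow m p.2)) //.
  by move=> p; rewrite swap_cat swap_bpow /cpow swap_apow.
have ny' : ~ inH n m t (swap y).
  move=> [S' hS']; apply: ny.
  exists [seq (p.2, p.1) | p <- S'].
  move: (swap_geq hS'); rewrite swapK.
  rewrite (@swap_flat _ (fun p => dpow n p.1 ++ cpow m p.2)); last first.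
    by move=> p; rewrite swap_cat /cpow /dpow swap_bpow swap_apow.
  move=> h; apply: Geq_trans h _; rewrite -map_comp.
  apply: geq_flat => p /=; exact: Geq_sym (cd_comm m n t _ _).
have [r1 r2 r3] := partA hn0 hm0 ht0 iy ny'
  (Geq_trans (swap_geq h1) (reord _ _ _ _)) (Geq_trans (swap_geq h2) (reord _ _ _ _)).
by split.
Qed.
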